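(* Let $V$ be a quasi-regular mixed lattice vector space, let $A$ be a quasi-ideal and $B$ a positively generated $(\le)$-order convex subspace of $V$. Then $A+B$ is a mixed-order convex subspace. Moreover, if $B$ is an ideal then $A+B$ is a quasi-ideal, and if in addition $A$ is regular then $(A+B)_p=A_p+B_p$.
   Context: A mixed lattice vector space is a real vector space $V$ with two partial orderings $\le$ (initial) and $\preceq$ (specific), each compatible with the vector space structure, such that for all $x,y$ the mixed lower envelope $x\curlywedge y=\max\{w: w\preceq x,\ w\le y\}$ and mixed upper envelope $x\curlyvee y=\min\{w: x\preceq w,\ y\le w\}$ exist (max/min with respect to $\le$). $V_p=\{x:0\le x\}$, $V_{sp}=\{x:0\preceq x\}$, $E_p=E\cap V_p$, $E_{sp}=E\cap V_{sp}$. $V$ is quasi-regular if $V_{sp}$ is closed under $\curlywedge,\curlyvee$. A mixed lattice subspace is a linear subspace closed under $\curlywedge,\curlyvee$. A subspace $S$ is regular if $S=S_{sp}-S_{sp}$ and positively generated if $S=S_p-S_p$. A subset $U$ is $(\le)$-order convex if $x\le z\le y$ with $x,y\in U$ implies $z\in U$. A subspace $A$ is mixed-order convex if $y\in A$ and $0\preceq x\le y$ imply $x\in A$. An ideal is a $(\le)$-order convex mixed lattice subspace; a quasi-ideal is a mixed-order convex mixed lattice subspace. *)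

(* Defs.v *)
From HB Require Import structures.
From mathcomp Require Import all_boot all_order all_algebra.
From mathcomp Require Import reals.
Set Implicit Arguments. Unset Strict Implicit. Unset Printing Implicit Defensive.
Import GRing.Theory Num.Theory.
Local Open Scope ring_scope.

(* Mixed lattice vector spaces over the reals (R : realType), V : lmodType R.
   The two orderings are given as relations: [ile] (initial, <=) and
   [sle] (specific, \preceq). *)

Section MixedLattice.
Variables (R : realType) (V : lmodType R).
Implicit Types (le : V -> V -> Prop) (S U A B : V -> Prop).

Definition ordered_vs le : Prop :=
  [/\ (forall x, le x x),
      (forall x y, le x y -> le y x -> x = y),
      (forall x y z, le x y -> le y z -> le x z),
      (forall x y z, le x y -> le (x + z) (y + z))
    & (forall (a : R) x y, 0 <= a -> le x y -> le (a *: x) (a *: y))].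

(* w is the mixed lower envelope  x ⋏ y = max_{<=} {w : w ⪯ x, w <= y} *)
Definition is_mlow (ile sle : V -> V -> Prop) (x y w : V) : Prop :=
  [/\ sle w x, ile w y & forall u, sle u x -> ile u y -> ile u w].

(* w is the mixed upper envelope  x ⋎ y = min_{<=} {w : x ⪯ w, y <= w} *)
Definition is_mup (ile sle : V -> V -> Prop) (x y w : V) : Prop :=
  [/\ sle x w, ile y w & forall u, sle x u -> ile y u -> ile w u].

Definition mixed_lattice_vs (ile sle : V -> V -> Prop) : Prop :=
  [/\ ordered_vs ile, ordered_vs sle,
      (forall x y, exists w, is_mlow ile sle x y w)
    & (forall x y, exists w, is_mup ile sle x y w)].

Definition quasi_regular (ile sle : V -> V -> Prop) : Prop :=
  (forall x y w, sle 0 x -> sle 0 y -> is_mlow ile sle x y w -> sle 0 w) /\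
  (forall x y w, sle 0 x -> sle 0 y -> is_mup ile sle x y w -> sle 0 w).

Definition subspace S : Prop :=
  [/\ S 0, (forall x y, S x -> S y -> S (x + y))
    & (forall (a : R) x, S x -> S (a *: x))].

Definition mixed_lattice_subspace (ile sle : V -> V -> Prop) S : Prop :=
  [/\ subspace S,
      (forall x y w, S x -> S y -> is_mlow ile sle x y w -> S w)
    & (forall x y w, S x -> S y -> is_mup ile sle x y w -> S w)].

(* S_p = S ∩ V_p  and  S_sp = S ∩ V_sp *)
Definition pos_part (ile : V -> V -> Prop) S : V -> Prop :=
  fun x => S x /\ ile 0 x.

Definition sumset A B : V -> Prop :=
  fun z => exists a b, [/\ A a, B b & z = a + b].
Definition diffset A B : V -> Prop :=
  fun z => exists a b, [/\ A a, B b & z = a - b].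

Definition positively_generated (ile : V -> V -> Prop) S : Prop :=
  forall x, S x <-> diffset (pos_part ile S) (pos_part ile S) x.

Definition regular (sle : V -> V -> Prop) S : Prop :=
  forall x, S x <-> diffset (pos_part sle S) (pos_part sle S) x.

Definition order_convex (ile : V -> V -> Prop) U : Prop :=
  forall x y z, U x -> U y -> ile x z -> ile z y -> U z.

Definition mixed_order_convex (ile sle : V -> V -> Prop) A : Prop :=
  forall x y, A y -> sle 0 x -> ile x y -> A x.

Definition ideal (ile sle : V -> V -> Prop) S : Prop :=
  order_convex ile S /\ mixed_lattice_subspace ile sle S.

Definition quasi_ideal (ile sle : V -> V -> Prop) S : Prop :=
  mixed_order_convex ile sle S /\ mixed_lattice_subspace ile sle S.

End MixedLattice.

(* Main.v *)
Require Import Defs.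
From HB Require Import structures.
From mathcomp Require Import all_boot all_order all_algebra.
From mathcomp Require Import reals.
Local Open Scope ring_scope.
Import GRing.Theory.
Set Implicit Arguments. Unset Strict Implicit.

Section Aux.
Variables (R : realType) (V : lmodType R) (le : V -> V -> Prop).
Hypothesis H : ordered_vs le.

Lemma lrefl x : le x x. Proof. by case: H. Qed.
Lemma ltr x y z : le x y -> le y z -> le x z. Proof. by case: H => _ _ T _ _; apply: T. Qed.
Lemma ladd x y z : le x y -> le (x + z) (y + z). Proof. by case: H => _ _ _ T _; apply: T. Qed.
Lemma lanti x y : le x y -> le y x -> x = y. Proof. by case: H => _ T _ _ _; apply: T. Qed.
Lemma lsub x y : le x y -> le 0 (y - x).
Proof. by move=> h; have := ladd (- x) h; rewrite subrr. Qed.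
Lemma lsubI x y : le 0 (y - x) -> le x y.
Proof. by move=> h; have := ladd x h; rewrite add0r subrK. Qed.
Lemma ldiff x y x' y' : le x' y' -> y - x = y' - x' -> le x y.
Proof. by move=> /lsub h e; apply: lsubI; rewrite e. Qed.
Lemma lpos2 a b : le 0 a -> le 0 b -> le 0 (a + b).
Proof. by move=> ha hb; have := ladd a hb; rewrite add0r addrC; apply: ltr. Qed.
Lemma ladd2 x y x' y' : le x y -> le x' y' -> le (x + x') (y + y').
Proof.
move=> h1 h2; apply: lsubI; have := lpos2 (lsub h1) (lsub h2).
by rewrite opprD addrACA.
Qed.
End Aux.
Theorem theorem4p16 (R : realType) (V : lmodType R)
  (ile sle : V -> V -> Prop) (A B : V -> Prop) :
  mixed_lattice_vs ile sle ->
  quasi_regular ile sle ->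
  quasi_ideal ile sle A ->
  subspace B -> positively_generated ile B -> order_convex ile B ->
  [/\ subspace (sumset A B),
      mixed_order_convex ile sle (sumset A B),
      (ideal ile sle B -> quasi_ideal ile sle (sumset A B))
    & (ideal ile sle B -> regular sle A ->
       forall x, pos_part ile (sumset A B) x <->
                 sumset (pos_part ile A) (pos_part ile B) x)].
Proof.
move=> [Hi Hs Hlow Hup] _ [Aconv [[A0 AD AZ] Alow Aup]] [B0 BD BZ] Bpg Bconv.
have SS : subspace (sumset A B).
  split.
  - by exists 0, 0; rewrite addr0.
  - move=> _ _ [a1 [b1 [Ha1 Hb1 ->]]] [a2 [b2 [Ha2 Hb2 ->]]].
    by exists (a1 + a2), (b1 + b2); split; [apply: AD|apply: BD|rewrite addrACA].
  - move=> c _ [a [b [Ha Hb ->]]].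
    by exists (c *: a), (c *: b); split; [apply: AZ|apply: BZ|rewrite scalerDr].
have SN : forall x, sumset A B x -> sumset A B (- x).
  by move=> x hx; rewrite -scaleN1r; case: SS => _ _; apply.
have SD : forall x y, sumset A B x -> sumset A B y -> sumset A B (x + y).
  by case: SS.
have MC : mixed_order_convex ile sle (sumset A B).
  move=> x _ [a [b [Aa Bb ->]]] sx ixy.
  have [b1 [b2 [[Bb1 pb1] [Bb2 pb2] eb]]] := (Bpg b).1 Bb.
  have [a' Ma'] := Hup 0 a.
  have Aa' : A a' := Aup _ _ _ A0 Aa Ma'.
  case: Ma' => sa' ia' _.
  have ix : ile x (a' + b1).
    apply: (ltr Hi ixy); rewrite eb.
    apply: (ladd2 Hi ia'); apply: (ldiff Hi pb2).
    by rewrite opprB addrC subrK subr0.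
  have [w [sw iw mw]] := Hlow x b1.
  have w0 : ile 0 w := mw 0 sx pb1.
  have Bw : B w := Bconv _ _ _ B0 Bb1 w0 iw.
  have h1 : ile (x - a') w.
    apply: mw.
      by apply: (ldiff Hs sa'); rewrite opprB addrC subrK subr0.
    by apply: (ldiff Hi ix); rewrite opprB addrA [b1 + a']addrC.
  have At : A (x - w).
    apply: (Aconv _ a' Aa').
      by apply: (ldiff Hs sw); rewrite subr0.
    by apply: (ldiff Hi h1); rewrite !opprB addrCA.
  by exists (x - w), w; split => //; rewrite subrK.
have UB : ideal ile sle B -> forall v, sumset A B v ->
    exists u, [/\ sumset A B u, sle 0 u & ile v u].
  move=> [_ [_ _ Bup]] _ [a [b [Aa Bb ->]]].
  have [a' Ma'] := Hup 0 a; have [b' Mb'] := Hup 0 b.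
  have Aa' := Aup _ _ _ A0 Aa Ma'; have Bb' := Bup _ _ _ B0 Bb Mb'.
  case: Ma' => sa ia _; case: Mb' => sb ib _.
  exists (a' + b'); split; first by exists a', b'.
    by apply: (lpos2 Hs).
    by apply: (ladd2 Hi).
split => //.
- move=> HB; split => //; split => //.
  + move=> x y w Sx Sy [sw iw mw].
    have [u [Su su iu]] := UB HB (x - y) (SD _ _ Sx (SN _ Sy)).
    have h : ile (x - u) w.
      apply: mw.
        by apply: (ldiff Hs su); rewrite opprB addrC subrK subr0.
      by apply: (ldiff Hi iu); rewrite !opprB addrCA.
    have St : sumset A B (x - w).
      apply: (MC _ u Su).
        by apply: (ldiff Hs sw); rewrite subr0.
      by apply: (ldiff Hi h); rewrite !opprB addrCA.
    have -> : w = x + - (x - w) by rewrite opprB addrC subrK.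
    exact: SD _ _ Sx (SN _ St).
  + move=> x y w Sx Sy [sw iw mw].
    have [u [Su su iu]] := UB HB (y - x) (SD _ _ Sy (SN _ Sx)).
    have h : ile w (x + u).
      apply: mw.
        by apply: (ldiff Hs su); rewrite addrC addKr subr0.
      by apply: (ldiff Hi iu); rewrite opprB addrA [u + x]addrC.
    have St : sumset A B (w - x).
      apply: (MC _ u Su).
        by apply: (lsub Hs).
      by apply: (ldiff Hi h); rewrite opprB addrA [u + x]addrC.
    have -> : w = x + (w - x) by rewrite addrC subrK.
    exact: SD.
- move=> HB Areg x; split.
  + move=> [[a [b [Aa Bb ->]]] px].
    have [a1 [a2 [[Aa1 sa1] [Aa2 sa2] ea]]] := (Areg a).1 Aa.
    case: HB => _ [_ _ Bup].
    have [be Mbe] := Hup b 0; have Bbe := Bup _ _ _ Bb B0 Mbe.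
    case: Mbe => sbe ibe _.
    have [w [sw iw mw]] := Hlow a1 (a + b).
    have w0 : ile 0 w := mw 0 sa1 px.
    have Aw : A w.
      have : A (a1 - w).
        apply: (Aconv _ a1 Aa1).
          by apply: (lsub Hs).
        by apply: (ldiff Hi w0); rewrite subKr subr0.
      move=> h; have := AD _ _ Aa1 (AZ (-1) _ h).
      by rewrite scaleN1r opprB addrC subrK.
    have h : ile (a + b - be) w.
      apply: mw.
        apply: (ldiff Hs (lpos2 Hs sa2 (lsub Hs sbe))).
        rewrite subr0 ea.
        by rewrite !opprD !opprK !addrA subrr add0r addrAC.
      by apply: (ldiff Hi ibe); rewrite subKr subr0.
    exists w, (a + b - w); split => //.
    * split; last by apply: (lsub Hi).
      apply: (Bconv 0 be) => //; first by apply: (lsub Hi).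
      apply: (ldiff Hi h).
      by rewrite !opprD !opprK [_ - b + w]addrC [_ - b + be]addrC addrCA.
    * by rewrite addrCA subrr addr0.
  + move=> [a [b [[Aa pa] [Bb pb] ->]]]; split; last by apply: (lpos2 Hi).
    by exists a, b.
Qed.
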